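(* Let $G$ be an almost Abelian Lie group with Lie algebra $\mathfrak g=\mathbb{R}\xi\ltimes_AV$, where $V$ is an Abelian ideal of codimension one and $[\xi,X]=AX$ for $X\in V$, with $A\in\mathfrak{gl}(V)$, $A\neq0$. Equip $G$ with a left-invariant Riemannian metric for which $\xi$ is a unit vector orthogonal to $V$, and write $A=A^{sy}+A^{sk}$ with $A^{sy}$ symmetric and $A^{sk}$ skew-symmetric with respect to the inner product on $V$. If $G$ is not flat, then its $0$-nullity distribution is the left-invariant distribution determined by the subspace $\ker A^{sy}\cap (A^{sk})^{-1}(\ker A^{sy})$ of $V$, where $(A^{sk})^{-1}(\ker A^{sy})=\{X\in V: A^{sk}X\in\ker A^{sy}\}$.
   Context: Curvature convention: $R(X,Y)Z=\nabla_X\nabla_YZ-\nabla_Y\nabla_XZ-\nabla_{[X,Y]}Z$. The $0$-nullity distribution is $\mathcal N_0|_p=\{z\in T_pM: R_p(x,y)z=0\ \forall x,y\in T_pM\}$. An almost Abelian Lie group is a non-Abelian connected real Lie group whose Lie algebra has a codimension one Abelian ideal. *)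

(* Defs.v *)
(* Almost Abelian Lie algebra g = R xi |x_A V, V = R^n (column vectors),
   elements of g represented as pairs (t, X) meaning t*xi + X. *)
From mathcomp Require Import all_boot all_order all_algebra.
From mathcomp Require Import reals.
Set Implicit Arguments. Unset Strict Implicit. Unset Printing Implicit Defensive.
Import Order.TTheory GRing.Theory Num.Theory.
Local Open Scope ring_scope.

Definition aa_alg (R : realType) (n : nat) : Type := (R * 'cV[R]_n)%type.

(* the left-invariant metric at the identity: xi unit, xi orthogonal to V,
   standard (orthonormal-coordinates) inner product on V *)
Definition aa_inner (R : realType) (n : nat) (u v : aa_alg R n) : R :=
  u.1 * v.1 + \sum_(i < n) u.2 i 0 * v.2 i 0.

Definition aa_bracket (R : realType) (n : nat) (A : 'M[R]_n)
  (u v : aa_alg R n) : aa_alg R n :=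
  (0, u.1 *: (A *m v.2) - v.1 *: (A *m u.2)).

(* Levi-Civita connection of the left-invariant metric, on left-invariant fields:
   torsion free and metric (X<Y,Z> = 0 for left-invariant fields) *)
Definition is_levi_civita (R : realType) (n : nat) (A : 'M[R]_n)
  (nabla : aa_alg R n -> aa_alg R n -> aa_alg R n) : Prop :=
  (forall x y, nabla x y - nabla y x = aa_bracket A x y) /\
  (forall x y z, aa_inner (nabla x y) z + aa_inner y (nabla x z) = 0).

Definition curv (R : realType) (n : nat) (A : 'M[R]_n)
  (nabla : aa_alg R n -> aa_alg R n -> aa_alg R n) (x y z : aa_alg R n) : aa_alg R n :=
  nabla x (nabla y z) - nabla y (nabla x z) - nabla (aa_bracket A x y) z.

(* fibre at the identity of the 0-nullity distribution *)
Definition nullity0 (R : realType) (n : nat) (A : 'M[R]_n)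
  (nabla : aa_alg R n -> aa_alg R n -> aa_alg R n) (z : aa_alg R n) : Prop :=
  forall x y, curv A nabla x y z = 0.

Definition is_flat (R : realType) (n : nat) (A : 'M[R]_n)
  (nabla : aa_alg R n -> aa_alg R n -> aa_alg R n) : Prop :=
  forall x y z, curv A nabla x y z = 0.

Definition sym_part (R : realType) (n : nat) (A : 'M[R]_n) : 'M[R]_n :=
  2^-1 *: (A + A^T).
Definition skew_part (R : realType) (n : nat) (A : 'M[R]_n) : 'M[R]_n :=
  2^-1 *: (A - A^T).

(* Main.v *)
Require Import Defs.
From mathcomp Require Import all_boot all_order all_algebra.
From mathcomp Require Import reals ring lra.
Set Implicit Arguments. Unset Strict Implicit. Unset Printing Implicit Defensive.
Import Order.TTheory GRing.Theory Num.Theory.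
Local Open Scope ring_scope.

Lemma zl (V : zmodType) (a b c d : V) : (a - c) - (b - d) = (a - b) - (c - d).
Proof. by rewrite !opprB !addrA addrAC (addrAC a) -!addrA (addrC (-c)). Qed.

Lemma fstB (R : realType) n (p q : aa_alg R n) : (p - q).1 = p.1 - q.1.
Proof. by []. Qed.
Lemma sndB (R : realType) n (p q : aa_alg R n) : (p - q).2 = p.2 - q.2.
Proof. by []. Qed.
Lemma fstN (R : realType) n (p : aa_alg R n) : (- p).1 = - p.1.
Proof. by []. Qed.
Lemma sndN (R : realType) n (p : aa_alg R n) : (- p).2 = - p.2.
Proof. by []. Qed.
Lemma pairE (R : realType) n (p q : aa_alg R n) : p.1 = q.1 -> p.2 = q.2 -> p = q.
Proof. by case: p q => a b [c d] /= -> ->. Qed.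
Lemma fst0 (R : realType) n : (0 : aa_alg R n).1 = 0. Proof. by []. Qed.
Lemma snd0 (R : realType) n : (0 : aa_alg R n).2 = 0. Proof. by []. Qed.

Section S.
Variables (R : realType) (n : nat).
Implicit Types (u v w : 'cV[R]_n) (M : 'M[R]_n).

Definition dot u v : R := \sum_(i < n) u i 0 * v i 0.

Lemma innerE (x y : aa_alg R n) : aa_inner x y = x.1 * y.1 + dot x.2 y.2.
Proof. by []. Qed.

Lemma dotE u v : dot u v = (u^T *m v) 0 0.
Proof. by rewrite mxE; apply: eq_bigr => i _; rewrite mxE. Qed.

Lemma dotC u v : dot u v = dot v u.
Proof. by apply: eq_bigr => i _; rewrite mulrC. Qed.

Lemma dotDl u v w : dot (u + v) w = dot u w + dot v w.
Proof. by rewrite /dot -big_split; apply: eq_bigr => i _; rewrite !mxE mulrDl. Qed.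

Lemma dotZl a u v : dot (a *: u) v = a * dot u v.
Proof. by rewrite /dot mulr_sumr; apply: eq_bigr => i _; rewrite !mxE mulrA. Qed.

Lemma dotNl u v : dot (- u) v = - dot u v.
Proof. by rewrite -scaleN1r dotZl mulN1r. Qed.

Lemma dotBl u v w : dot (u - v) w = dot u w - dot v w.
Proof. by rewrite dotDl dotNl. Qed.

Lemma dotDr u v w : dot w (u + v) = dot w u + dot w v.
Proof. by rewrite !(dotC w) dotDl. Qed.
Lemma dotZr a u v : dot v (a *: u) = a * dot v u.
Proof. by rewrite !(dotC v) dotZl. Qed.
Lemma dotNr u v : dot v (- u) = - dot v u.
Proof. by rewrite !(dotC v) dotNl. Qed.
Lemma dotBr u v w : dot w (u - v) = dot w u - dot w v.
Proof. by rewrite !(dotC w) dotBl. Qed.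
Lemma dot0l u : dot 0 u = 0.
Proof. by rewrite -(scale0r 0) dotZl mul0r. Qed.
Lemma dot0r u : dot u 0 = 0.
Proof. by rewrite dotC dot0l. Qed.

Lemma dot_mull M u v : dot (M *m u) v = dot u (M^T *m v).
Proof. by rewrite !dotE trmx_mul mulmxA. Qed.

Lemma dot_ge0 u : 0 <= dot u u.
Proof. by apply: sumr_ge0 => i _; rewrite -expr2 sqr_ge0. Qed.

Lemma dot_ge0_aux u (i : 'I_n) : 0 <= u i 0 * u i 0.
Proof. by rewrite -expr2 sqr_ge0. Qed.

Lemma dot_eq0 u : dot u u = 0 -> u = 0.
Proof.
move=> H; apply/matrixP => i j; rewrite (ord1 j) mxE.
have := @psumr_eq0P R _ xpredT (fun i => u i 0 * u i 0) (fun i _ => dot_ge0_aux u i) H i isT.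
by move/eqP; rewrite mulf_eq0 orbb => /eqP.
Qed.

Variable A : 'M[R]_n.
Local Notation S := (sym_part A).
Local Notation K := (skew_part A).

Lemma symS : S^T = S.
Proof. by rewrite /sym_part linearZ linearD /= trmxK addrC. Qed.
Lemma skK : K^T = - K.
Proof. by rewrite /skew_part linearZ linearB /= trmxK -scalerN opprB. Qed.
Lemma SKA : S + K = A.
Proof.
rewrite /sym_part /skew_part -scalerDr addrACA subrr addr0 -mulr2n.
by rewrite -scaler_nat scalerA mulVf ?scale1r // pnatr_eq0.
Qed.

Lemma dotS u v : dot (S *m u) v = dot u (S *m v).
Proof. by rewrite dot_mull symS. Qed.
Lemma dotK u v : dot (K *m u) v = - dot u (K *m v).
Proof. by rewrite dot_mull skK mulNmx dotNr. Qed.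

Definition N (x y : aa_alg R n) : aa_alg R n :=
  (dot (S *m x.2) y.2, x.1 *: (K *m y.2) - y.1 *: (S *m x.2)).

Lemma N_LC : is_levi_civita A N.
Proof.
split.
  case=> t X [s Y]; rewrite /N /aa_bracket /=; congr (_, _).
    by rewrite dotS dotC subrr.
  rewrite -[in RHS]SKA !mulmxDl.
  by apply/matrixP => i j; rewrite !mxE; ring.
case=> t X [s Y] [r Z]; rewrite !innerE /N /=.
rewrite !(dotBl, dotBr, dotZl, dotZr) dotK (dotS X Z) (dotS X Y) (dotC Y (S *m X)) (dotC Y).
rewrite (dotS X Y); ring.
Qed.

Lemma innerC (x y : aa_alg R n) : aa_inner x y = aa_inner y x.
Proof. by rewrite !innerE dotC mulrC. Qed.
Lemma innerBl (x y z : aa_alg R n) : aa_inner (x - y) z = aa_inner x z - aa_inner y z.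
Proof. rewrite !innerE /= dotBl; ring. Qed.
Lemma innerBr (x y z : aa_alg R n) : aa_inner z (x - y) = aa_inner z x - aa_inner z y.
Proof. by rewrite !(innerC z) innerBl. Qed.
Lemma inner_eq0 (x : aa_alg R n) : aa_inner x x = 0 -> x = 0.
Proof.
case: x => t X; rewrite innerE /= => H.
have h1 : 0 <= t * t by rewrite -expr2 sqr_ge0.
have h2 := dot_ge0 X.
have ht : t * t = 0 by apply/eqP; rewrite eq_le h1 andbT -H lerDl.
have hX : dot X X = 0 by rewrite ht add0r in H.
move/eqP: ht; rewrite mulf_eq0 orbb => /eqP ->.
by rewrite (dot_eq0 hX).
Qed.

Lemma nabla_eq nabla : is_levi_civita A nabla -> forall x y, nabla x y = N x y.
Proof.
case=> T M; case: N_LC => T' M'.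
pose D x y := nabla x y - N x y.
have D1 x y : D x y = D y x.
  by apply/eqP; rewrite /D -subr_eq0 zl T T' subrr.
have D2 x y z : aa_inner (D x y) z = - aa_inner (D x z) y.
  rewrite /D !innerBl (innerC (nabla x z) y) (innerC (N x z) y).
  have := M x y z; have := M' x y z; move=> h1 h2; lra.
have D0 x y z : aa_inner (D x y) z = 0.
  have e : aa_inner (D x y) z = - aa_inner (D x y) z.
    by rewrite {1}D2 D1 D2 opprK D1 D2 D1.
  lra.
move=> x y; apply/eqP; rewrite -subr_eq0; apply/eqP.
by apply: inner_eq0; apply: D0.
Qed.

Ltac simps := rewrite ?(mul0mx, subrr, subr0, sub0r, mulmx0, scale0r, scale1r, scaler0,
  dot0l, dot0r, mul1r, mulr0, mul0r, oppr0, opprK, mulrN, mulNr).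
Ltac vecs := simps; rewrite ?dotS ?(mulmxN, mulmxBr, mulmxDr, mulmxBl, mulmxDl, mulmx0, scalerN, scalerBr, scalerDr, opprK, oppr0, subr0, sub0r);
  rewrite -?scalemxAr ?scalerN ?opprK; apply/matrixP => i j; rewrite !mxE; ring.
Ltac scals := simps; rewrite ?(dotDr, dotDl, dotBl, dotBr, dotZl, dotZr, dotNl, dotNr, scale1r);
  rewrite ?dot_mull ?trmx_mul ?symS ?skK; simps.

Lemma curvN_V X Y t Z : curv A N (0,X) (0,Y) (t,Z) =
  (0, dot X (S *m Z) *: (S *m Y) - dot Y (S *m Z) *: (S *m X)).
Proof.
apply: pairE; rewrite /curv !(fstB, sndB, fstN, sndN) /N /aa_bracket /=.
  by scals; rewrite (dotC Y) -!dotS; ring.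
vecs.
Qed.

Lemma curvN_xi X t Z : curv A N (1,0) (0,X) (t,Z) =
  (- dot X (S *m (K *m Z) + A^T *m (S *m Z)), t *: (S *m (A *m X) - K *m (S *m X))).
Proof.
apply: pairE; rewrite /curv !(fstB, sndB, fstN, sndN) /N /aa_bracket /=.
  by scals; ring.
vecs.
Qed.

Lemma curvN_null x y Z : S *m Z = 0 -> S *m (K *m Z) = 0 -> curv A N x y (0,Z) = 0.
Proof.
case: x => t X; case: y => s Y => hZ hKZ.
apply: pairE; rewrite /curv !(fstB, sndB, fstN, sndN) /N /aa_bracket /=.
  by scals; rewrite ?hZ ?hKZ; simps.
simps; rewrite ?dotS ?hZ ?hKZ; vecs.
Qed.

Lemma flatN : S = 0 -> is_flat A N.
Proof.
move=> hS [t X] [s Y] [r Z].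
apply: pairE; rewrite /curv !(fstB, sndB, fstN, sndN) /N /aa_bracket /= hS.
  by simps.
vecs.
Qed.

Lemma mx_eq0 (M : 'M[R]_n) : (forall X : 'cV[R]_n, M *m X = 0) -> M = 0.
Proof.
move=> H; apply/matrixP => i j.
have := H (delta_mx j 0); rewrite -colE => /matrixP /(_ i 0).
by rewrite !mxE.
Qed.

Lemma symS_ij i j : S j i = S i j.
Proof. by rewrite -{1}symS mxE. Qed.

Lemma sq_ge0 (x : R) : 0 <= x * x.
Proof. by rewrite -expr2 sqr_ge0. Qed.

Lemma trS : S *m A = K *m S -> S = 0.
Proof.
move=> h.
have e : \tr (S *m S) = 0.
  have hA : S *m A = S *m S + S *m K by rewrite -mulmxDr SKA.
  have := congr1 mxtrace h; rewrite hA mxtraceD (mxtrace_mulC K).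
  lra.
have e' : \sum_i \sum_j S i j * S i j = 0.
  transitivity (\tr (S *m S)); last exact e.
  rewrite /mxtrace; apply: eq_bigr => i _; rewrite mxE; apply: eq_bigr => j _.
  by rewrite symS_ij.
apply/matrixP => i j; rewrite [X in _ = X]mxE.
have hi : forall i, 0 <= \sum_j S i j * S i j.
  by move=> k; apply: sumr_ge0 => l _; rewrite -expr2 sqr_ge0.
have := @psumr_eq0P R _ xpredT _ (fun k _ => hi k) e' i isT.
move/(@psumr_eq0P R _ xpredT (fun l => S i l * S i l)) => /(_ (fun l _ => sq_ge0 _) j isT).
by move/eqP; rewrite mulf_eq0 orbb => /eqP.
Qed.
End S.

Unset Implicit Arguments.
Set Strict Implicit.

Theorem lemma4p1 (R : realType) (n : nat) (A : 'M[R]_n)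
  (nabla : aa_alg R n -> aa_alg R n -> aa_alg R n) :
  A != 0 ->
  is_levi_civita A nabla ->
  ~ is_flat A nabla ->
  forall z : aa_alg R n,
    nullity0 A nabla z <->
    (z.1 = 0 /\ sym_part A *m z.2 = 0 /\ sym_part A *m (skew_part A *m z.2) = 0).
Proof.
move=> _ LC nf z.
have HN := nabla_eq LC.
have ce x y w : curv A nabla x y w = curv A (N A) x y w by rewrite /curv !HN.
have nfN : ~ is_flat A (N A) by move=> fl; apply: nf => x y w; rewrite ce fl.
rewrite /nullity0; case: z => t Z /=; split; last first.
  by case=> -> [h1 h2] x y; rewrite ce curvN_null.
move=> H.
set S := sym_part A; set K := skew_part A.
have h1 X := H (1,0) (0,X); 
have c1 (X : 'cV[R]_n) : dot X (S *m (K *m Z) + A^T *m (S *m Z)) = 0.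
  by have := h1 X; rewrite ce curvN_xi => /(congr1 fst) /= /eqP; rewrite oppr_eq0 => /eqP.
have c2 (X : 'cV[R]_n) : t *: (S *m (A *m X) - K *m (S *m X)) = 0.
  by have := h1 X; rewrite ce curvN_xi => /(congr1 snd).
have PZ := dot_eq0 (c1 _).
have ht : t = 0.
  apply/eqP; apply/negP => /negP tn0; apply: nfN; apply: flatN; apply: trS.
  apply/eqP; rewrite -subr_eq0; apply/eqP; apply: mx_eq0 => X.
  have := c2 X; move/eqP; rewrite scaler_eq0 (negbTE tn0) /= mulmxBl -!mulmxA.
  by move/eqP.
split => //.
have hw : S *m Z = 0.
  set w := S *m Z in PZ *.
  have [//|wn0] := eqVneq w 0.
  exfalso.
  have hV X Y : dot X w *: (S *m Y) = dot Y w *: (S *m X).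
    have := H (0,X) (0,Y); rewrite ce curvN_V => /(congr1 snd) /= /eqP.
    by rewrite subr_eq0 => /eqP.
  have hc Y : dot Z w *: (S *m Y) = dot Y w *: w := hV Z Y.
  have dww : dot w w != 0 by apply/eqP => /dot_eq0 /eqP; rewrite (negbTE wn0).
  have cn0 : dot Z w != 0.
    apply/eqP => c0; have := hc w; rewrite c0 scale0r => /esym /eqP.
    by rewrite scaler_eq0 (negbTE dww) (negbTE wn0).
  have AT : A^T = S - K by rewrite -[in LHS](@SKA R n A) linearD /= symS skK.
  have E : S *m (K *m Z) + S *m w - K *m w = 0 by rewrite -PZ AT mulmxBl addrA.
  have E2 : dot (K *m Z) w *: w + dot w w *: w - dot Z w *: (K *m w) = 0.
    by rewrite -(hc (K *m Z)) -(hc w) -!scalerDr -scalerBr E scaler0.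
  have E3 := congr1 (fun v => dot v w) E2; rewrite /= dot0l !(dotBl, dotDl, dotZl) in E3.
  have Kww : dot (K *m w) w = 0 by have := dotK A w w; rewrite (dotC w (K *m w)); lra.
  rewrite Kww in E3.
  have : (dot (K *m Z) w + dot w w) * dot w w = 0 by rewrite mulrDl; lra.
  move/eqP; rewrite mulf_eq0 (negbTE dww) orbF => /eqP s0.
  move: E2; rewrite -scalerDl s0 scale0r sub0r => /eqP.
  rewrite oppr_eq0 scaler_eq0 (negbTE cn0) /= => /eqP Kw.
  have : dot (K *m Z) w = 0 by rewrite (dotK A) Kw dot0r oppr0.
  by move=> h0; move: s0; rewrite h0 add0r => /eqP; rewrite (negbTE dww).
by split => //; rewrite hw mulmx0 addr0 in PZ.
Qed.
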